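(* There is an absolute constant $c>0$ such that for all $k\ge 2$, $\gamma\in(0,1/4]$ and $\varepsilon\in(0,1]$ the following holds: if each of $n$ users reports its sample via $\varepsilon$-RAPPOR and the curator applies any (possibly randomized) decision rule to the $n$ reports (so that the whole procedure is a uniformity tester over $[k]$ with distance parameter $\gamma$), then $n\ge c\,k^{3/2}/(\gamma^2\varepsilon^2)$.
   Context: $\Delta([k])$ is the set of probability distributions on $[k]=\{1,\dots,k\}$, $u$ the uniform distribution on $[k]$, $d_{TV}(p,q)=\frac12\|p-q\|_1$. Users hold i.i.d. samples $X_1,\dots,X_n$ from an unknown $p\in\Delta([k])$. The $\varepsilon$-RAPPOR mechanism maps $x\in[k]$ to a random vector $b\in\{0,1\}^k$ obtained from the one-hot vector $e_x$ by flipping each coordinate independently with probability $1/(e^{\varepsilon/2}+1)$, independently across users. A uniformity tester with distance parameter $\gamma$ must, for every $p$, output ``uniform'' with probability at least $2/3$ if $p=u$ and ``not uniform'' with probability at least $2/3$ if $d_{TV}(p,u)>\gamma$. *)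

(* Defs.v *)
From Stdlib Require Import Reals List.
Import ListNotations.
Open Scope R_scope.

(* Domain [k] is encoded as {0,...,k-1}. A report b in {0,1}^k is a
   list bool of length k; a transcript is the list of the n reports. *)

Definition Rsum (l : list R) : R := fold_right Rplus 0 l.
Definition Rprod (l : list R) : R := fold_right Rmult 1 l.

Definition sum_range (k : nat) (f : nat -> R) : R := Rsum (map f (seq 0 k)).

Fixpoint bvecs (k : nat) : list (list bool) :=
  match k with
  | O => [nil]
  | S k' => flat_map (fun v => [true :: v; false :: v]) (bvecs k')
  end.

Fixpoint transcripts (n k : nat) : list (list (list bool)) :=
  match n with
  | O => [nil]
  | S n' => flat_map (fun t => map (fun b => b :: t) (bvecs k)) (transcripts n' k)
  end.

Definition flip_prob (eps : R) : R := / (exp (eps / 2) + 1).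

(* P[RAPPOR(x) = b]: each coordinate of the one-hot vector e_x is flipped
   independently with probability flip_prob eps. *)
Definition rappor_prob (eps : R) (k x : nat) (b : list bool) : R :=
  Rprod (map (fun j => if Bool.eqb (nth j b false) (Nat.eqb x j)
                       then 1 - flip_prob eps else flip_prob eps) (seq 0 k)).

Definition report_prob (eps : R) (k : nat) (p : nat -> R) (b : list bool) : R :=
  sum_range k (fun x => p x * rappor_prob eps k x b).

Definition transcript_prob (eps : R) (k : nat) (p : nat -> R)
  (t : list (list bool)) : R :=
  Rprod (map (report_prob eps k p) t).

(* A (possibly randomized) decision rule D outputs "uniform" on transcript t
   with probability D t in [0,1]. *)
Definition valid_rule (D : list (list bool) -> R) : Prop :=
  forall t, 0 <= D t <= 1.

Definition accept_prob (eps : R) (k n : nat) (p : nat -> R)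
  (D : list (list bool) -> R) : R :=
  Rsum (map (fun t => transcript_prob eps k p t * D t) (transcripts n k)).

Definition is_dist (k : nat) (p : nat -> R) : Prop :=
  (forall i, (i < k)%nat -> 0 <= p i) /\ sum_range k p = 1.

Definition is_uniform (k : nat) (p : nat -> R) : Prop :=
  forall i, (i < k)%nat -> p i = / INR k.

Definition dTV_unif (k : nat) (p : nat -> R) : R :=
  / 2 * sum_range k (fun i => Rabs (p i - / INR k)).

Definition is_uniformity_tester (eps : R) (k n : nat) (gamma : R)
  (D : list (list bool) -> R) : Prop :=
  forall p, is_dist k p ->
    (is_uniform k p -> accept_prob eps k n p D >= 2 / 3) /\
    (dTV_unif k p > gamma -> 1 - accept_prob eps k n p D >= 2 / 3).

(* Main.v *)
Require Import Defs.
From Stdlib Require Import Reals List Permutation Lia Lra.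
Import ListNotations.
Open Scope R_scope.

Lemma Rsum_app l1 l2 : Rsum (l1 ++ l2) = Rsum l1 + Rsum l2.
Proof. induction l1; simpl; [lra|rewrite IHl1; lra]. Qed.

Lemma Rprod_app l1 l2 : Rprod (l1 ++ l2) = Rprod l1 * Rprod l2.
Proof. induction l1; simpl; [lra|rewrite IHl1; lra]. Qed.

Lemma Rsum_ext {A} (f g : A -> R) l : (forall x, In x l -> f x = g x) ->
  Rsum (map f l) = Rsum (map g l).
Proof. intros H; f_equal; apply map_ext_in; auto. Qed.

Lemma Rprod_ext {A} (f g : A -> R) l : (forall x, In x l -> f x = g x) ->
  Rprod (map f l) = Rprod (map g l).
Proof. intros H; f_equal; apply map_ext_in; auto. Qed.

Lemma Rsum_plus {A} (f g : A -> R) l :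
  Rsum (map (fun x => f x + g x) l) = Rsum (map f l) + Rsum (map g l).
Proof. induction l; simpl; [lra|rewrite IHl; lra]. Qed.

Lemma Rsum_minus {A} (f g : A -> R) l :
  Rsum (map (fun x => f x - g x) l) = Rsum (map f l) - Rsum (map g l).
Proof. induction l; simpl; [lra|rewrite IHl; lra]. Qed.

Lemma Rsum_scal {A} c (f : A -> R) l :
  Rsum (map (fun x => c * f x) l) = c * Rsum (map f l).
Proof. induction l; simpl; [lra|rewrite IHl; lra]. Qed.

Lemma Rsum_scal_r {A} c (f : A -> R) l :
  Rsum (map (fun x => f x * c) l) = Rsum (map f l) * c.
Proof. induction l; simpl; [lra|rewrite IHl; lra]. Qed.

Lemma Rsum_le {A} (f g : A -> R) l : (forall x, In x l -> f x <= g x) ->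
  Rsum (map f l) <= Rsum (map g l).
Proof. induction l; simpl; intros H; [lra|].
  assert (f a <= g a) by auto. assert (Rsum (map f l) <= Rsum (map g l)) by auto. lra. Qed.

Lemma Rsum_nonneg {A} (f : A -> R) l : (forall x, In x l -> 0 <= f x) ->
  0 <= Rsum (map f l).
Proof. induction l; simpl; intros H; [lra|].
  assert (0 <= f a) by auto. assert (0 <= Rsum (map f l)) by auto. lra. Qed.

Lemma Rsum_zero {A} (f : A -> R) l : (forall x, In x l -> f x = 0) ->
  Rsum (map f l) = 0.
Proof. induction l; simpl; intros H; [lra|].
  rewrite H, IHl; auto; lra. Qed.

Lemma Rsum_swap {A B} (F : A -> B -> R) l1 l2 :
  Rsum (map (fun x => Rsum (map (fun y => F x y) l2)) l1) =
  Rsum (map (fun y => Rsum (map (fun x => F x y) l1)) l2).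
Proof. induction l1; simpl.
  - rewrite Rsum_zero; auto.
  - rewrite IHl1, <- Rsum_plus. reflexivity. Qed.

Lemma Rsum_flat_map {A B} (g : A -> list B) (F : B -> R) l :
  Rsum (map F (flat_map g l)) = Rsum (map (fun x => Rsum (map F (g x))) l).
Proof. induction l; simpl; auto. rewrite map_app, Rsum_app, IHl. auto. Qed.

Lemma Rsum_perm l1 l2 : Permutation l1 l2 -> Rsum l1 = Rsum l2.
Proof. unfold Rsum, Rprod; induction 1; simpl; lra. Qed.

Lemma Rprod_perm l1 l2 : Permutation l1 l2 -> Rprod l1 = Rprod l2.
Proof. unfold Rprod; induction 1; simpl; [ring|rewrite IHPermutation; ring|ring|congruence]. Qed.

Lemma Rsum_mult {A B} (f : A -> R) (g : B -> R) l1 l2 :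
  Rsum (map f l1) * Rsum (map g l2) =
  Rsum (map (fun x => Rsum (map (fun y => f x * g y) l2)) l1).
Proof. induction l1; simpl; [lra|]. rewrite <- IHl1, Rsum_scal. lra. Qed.

Lemma Rprod_mult {A} (f g : A -> R) l :
  Rprod (map (fun x => f x * g x) l) = Rprod (map f l) * Rprod (map g l).
Proof. induction l; simpl; [lra|rewrite IHl; lra]. Qed.

Lemma Rprod_nonneg {A} (f : A -> R) l : (forall x, In x l -> 0 <= f x) ->
  0 <= Rprod (map f l).
Proof. induction l; simpl; intros H; [lra|].
  apply Rmult_le_pos; auto. Qed.

Lemma Rprod_pos {A} (f : A -> R) l : (forall x, In x l -> 0 < f x) ->
  0 < Rprod (map f l).
Proof. induction l; simpl; intros H; [lra|].
  apply Rmult_lt_0_compat; auto. Qed.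

Lemma Rprod_le {A} (f g : A -> R) l : (forall x, In x l -> 0 <= f x <= g x) ->
  Rprod (map f l) <= Rprod (map g l).
Proof. induction l; simpl; intros H; [lra|].
  apply Rmult_le_compat; try apply H; auto.
  apply Rprod_nonneg; intros; apply H; auto. Qed.

Lemma Rprod_const_seq c s m : Rprod (map (fun _ => c) (seq s m)) = c ^ m.
Proof. revert s; induction m; intros; simpl; auto. rewrite IHm; auto. Qed.

Lemma Rsum_const {A} c (l : list A) : Rsum (map (fun _ => c) l) = INR (length l) * c.
Proof. induction l; simpl length; [simpl; lra|]. rewrite S_INR; simpl; rewrite IHl; lra. Qed.

Lemma exp_Rsum {A} (f : A -> R) l : exp (Rsum (map f l)) = Rprod (map (fun x => exp (f x)) l).
Proof. induction l; simpl; [apply exp_0|]. rewrite exp_plus, IHl; auto. Qed.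


Lemma bvecs_prod_gen k : forall s (g : nat -> bool -> R),
  Rsum (map (fun b => Rprod (map (fun j => g j (nth (j - s)%nat b false)) (seq s k))) (bvecs k))
  = Rprod (map (fun j => g j true + g j false) (seq s k)).
Proof.
  induction k; intros s g.
  - simpl. lra.
  - simpl bvecs. rewrite Rsum_flat_map.
    transitivity (Rsum (map (fun v => (g s true + g s false) *
       Rprod (map (fun j => g j (nth (j - S s)%nat v false)) (seq (S s) k))) (bvecs k))).
    2:{ rewrite Rsum_scal, IHk. reflexivity. }
    apply Rsum_ext. intros v Hv.
    assert (E1 : forall F : list bool -> R, Rsum (map F [true :: v; false :: v]) = F (true :: v) + F (false :: v)) by (intros; simpl; lra).
    assert (E2 : forall F : nat -> R, Rprod (map F (seq s (S k))) = F s * Rprod (map F (seq (S s) k))) by reflexivity.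
    rewrite E1, !E2.
    assert (E : forall c, Rprod (map (fun j => g j (nth (j - s) (c :: v) false)) (seq (S s) k))
       = Rprod (map (fun j => g j (nth (j - S s) v false)) (seq (S s) k))).
    { intros c. apply Rprod_ext. intros j Hj. apply in_seq in Hj.
      replace (j - s)%nat with (S (j - S s)) by lia. reflexivity. }
    rewrite !E, Nat.sub_diag. simpl. lra.
Qed.

Lemma bvecs_prod k (g : nat -> bool -> R) :
  Rsum (map (fun b => Rprod (map (fun j => g j (nth j b false)) (seq 0 k))) (bvecs k))
  = Rprod (map (fun j => g j true + g j false) (seq 0 k)).
Proof.
  rewrite <- bvecs_prod_gen. apply Rsum_ext. intros b _. apply Rprod_ext.
  intros j _. rewrite Nat.sub_0_r. reflexivity.
Qed.

Lemma transcripts_prod n k (g : list bool -> R) :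
  Rsum (map (fun t => Rprod (map g t)) (transcripts n k)) = (Rsum (map g (bvecs k))) ^ n.
Proof.
  induction n; simpl; [lra|].
  rewrite Rsum_flat_map, <- IHn, Rsum_mult.
  rewrite (Rsum_swap (fun x y => g x * Rprod (map g y))).
  apply Rsum_ext. intros t _. rewrite map_map. simpl. reflexivity.
Qed.

Lemma bvecs_In k b : In b (bvecs k) <-> length b = k.
Proof.
  revert b; induction k; intros b; simpl.
  - split; [intros [<-|[]]; auto | destruct b; simpl; auto; discriminate].
  - rewrite in_flat_map. split.
    + intros [v [Hv Hb]]. apply IHk in Hv. simpl in Hb.
      destruct Hb as [<-|[<-|[]]]; simpl; auto.
    + destruct b as [|c v]; simpl; [discriminate|]. intros H. exists v.
      split; [apply IHk; lia|]. destruct c; simpl; auto.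
Qed.

Lemma bvecs_NoDup k : NoDup (bvecs k).
Proof.
  induction k; simpl. { constructor; [auto|constructor]. }
  induction IHk; simpl; [constructor|].
  constructor.
  - intros [H1|H1]; [discriminate|]. apply in_flat_map in H1.
    destruct H1 as [v [Hv Hb]]. simpl in Hb.
    destruct Hb as [Hb|[Hb|[]]]; inversion Hb; subst; auto.
  - constructor.
    + intros H1. apply in_flat_map in H1.
      destruct H1 as [v [Hv Hb]]. simpl in Hb.
      destruct Hb as [Hb|[Hb|[]]]; inversion Hb; subst; auto.
    + auto.
Qed.

Definition tr (p q j : nat) : nat :=
  if Nat.eqb j p then q else if Nat.eqb j q then p else j.

Lemma tr_inv p q j : tr p q (tr p q j) = j.
Proof. unfold tr.
  destruct (Nat.eqb_spec j p).
  - subst. destruct (Nat.eqb_spec q p); [subst; auto|].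
    rewrite Nat.eqb_refl. auto.
  - destruct (Nat.eqb_spec j q).
    + subst. rewrite Nat.eqb_refl. auto.
    + destruct (Nat.eqb_spec j p); [lia|]. destruct (Nat.eqb_spec j q); [lia|]. auto.
Qed.

Lemma tr_lt p q k j : (p < k)%nat -> (q < k)%nat -> (j < k)%nat -> (tr p q j < k)%nat.
Proof. unfold tr. intros. destruct (Nat.eqb j p), (Nat.eqb j q); lia. Qed.

Lemma tr_perm p q k : (p < k)%nat -> (q < k)%nat ->
  Permutation (map (tr p q) (seq 0 k)) (seq 0 k).
Proof. intros Hp Hq. apply nat_bijection_Permutation.
  - intros x Hx. apply tr_lt; auto.
  - intros x y H. rewrite <- (tr_inv p q x), <- (tr_inv p q y), H. auto.
Qed.

Lemma Rsum_tr p q k (F : nat -> R) : (p < k)%nat -> (q < k)%nat ->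
  Rsum (map (fun j => F (tr p q j)) (seq 0 k)) = Rsum (map F (seq 0 k)).
Proof. intros. rewrite <- (map_map (tr p q) F). apply Rsum_perm, Permutation_map, tr_perm; auto. Qed.

Lemma Rprod_tr p q k (F : nat -> R) : (p < k)%nat -> (q < k)%nat ->
  Rprod (map (fun j => F (tr p q j)) (seq 0 k)) = Rprod (map F (seq 0 k)).
Proof. intros. rewrite <- (map_map (tr p q) F). apply Rprod_perm, Permutation_map, tr_perm; auto. Qed.

Definition swp (p q : nat) (b : list bool) : list bool :=
  map (fun j => nth (tr p q j) b false) (seq 0 (length b)).

Lemma swp_length p q b : length (swp p q b) = length b.
Proof. unfold swp. rewrite length_map, length_seq. auto. Qed.

Lemma nth_map_seq0 (f : nat -> bool) n j : (j < n)%nat -> nth j (map f (seq 0 n)) false = f j.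
Proof. intros H. rewrite (nth_indep _ false (f 0%nat)) by (rewrite length_map, length_seq; auto).
  rewrite map_nth, seq_nth; auto. Qed.

Lemma nth_swp p q b j : (p < length b)%nat -> (q < length b)%nat ->
  nth j (swp p q b) false = nth (tr p q j) b false.
Proof. intros Hp Hq. destruct (Nat.lt_ge_cases j (length b)).
  - unfold swp. rewrite nth_map_seq0; auto.
  - rewrite (nth_overflow (swp p q b)) by (rewrite swp_length; lia).
    rewrite nth_overflow; auto.
    unfold tr. destruct (Nat.eqb_spec j p); [lia|]. destruct (Nat.eqb_spec j q); lia.
Qed.

Lemma swp_inv p q b : (p < length b)%nat -> (q < length b)%nat -> swp p q (swp p q b) = b.
Proof. intros Hp Hq. apply nth_ext with (d := false) (d' := false).
  - rewrite !swp_length; auto.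
  - intros j _. rewrite nth_swp; rewrite ?swp_length; auto. rewrite nth_swp, tr_inv; auto.
Qed.

Lemma NoDup_map_on {A B} (f : A -> B) l :
  (forall x y, In x l -> In y l -> f x = f y -> x = y) -> NoDup l -> NoDup (map f l).
Proof. intros Hf Hl. induction Hl; simpl; constructor.
  - intros Hin. apply in_map_iff in Hin. destruct Hin as [y [Hy Hy']].
    assert (y = x) by (apply Hf; simpl; auto). subst; auto.
  - apply IHHl. intros; apply Hf; simpl; auto.
Qed.

Lemma Rsum_swp p q k (F : list bool -> R) : (p < k)%nat -> (q < k)%nat ->
  Rsum (map (fun b => F (swp p q b)) (bvecs k)) = Rsum (map F (bvecs k)).
Proof. intros Hp Hq. rewrite <- (map_map (swp p q) F). apply Rsum_perm, Permutation_map.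
  apply Permutation_map_same_l.
  - apply NoDup_map_on; [|apply bvecs_NoDup].
    intros x y Hx Hy H. apply bvecs_In in Hx, Hy.
    rewrite <- (swp_inv p q x), <- (swp_inv p q y), H; auto; lia.
  - intros y Hy. apply in_map_iff in Hy. destruct Hy as [x [<- Hx]].
    apply bvecs_In in Hx. apply bvecs_In. rewrite swp_length; auto.
Qed.

Lemma flip_bounds eps : 0 < eps -> 0 < flip_prob eps < 1/2.
Proof. intros H. unfold flip_prob.
  assert (1 < exp (eps/2)). { rewrite <- exp_0. apply exp_increasing. lra. }
  split. apply Rinv_0_lt_compat; lra.
  apply Rmult_lt_reg_l with (exp (eps/2) + 1); [lra|]. rewrite Rinv_r; lra.
Qed.

Lemma Rprod_one {A} (F : A -> R) l : (forall x, In x l -> F x = 1) -> Rprod (map F l) = 1.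
Proof. induction l; simpl; intros H; auto. rewrite H, IHl; auto; lra. Qed.

Lemma rappor_sum eps k x : Rsum (map (rappor_prob eps k x) (bvecs k)) = 1.
Proof. unfold rappor_prob.
  rewrite (bvecs_prod k (fun j c => if Bool.eqb c (Nat.eqb x j) then 1 - flip_prob eps else flip_prob eps)).
  apply Rprod_one. intros j _. destruct (Nat.eqb x j); simpl; lra.
Qed.

Lemma tr_eqb p q x j : Nat.eqb (tr p q x) (tr p q j) = Nat.eqb x j.
Proof. destruct (Nat.eqb_spec x j).
  - subst. apply Nat.eqb_refl.
  - apply Nat.eqb_neq. intros H. apply n. rewrite <- (tr_inv p q x), H, tr_inv. auto.
Qed.

Lemma rappor_swp eps k p q x b : (p < k)%nat -> (q < k)%nat -> length b = k ->
  rappor_prob eps k x (swp p q b) = rappor_prob eps k (tr p q x) b.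
Proof. intros Hp Hq Hb. unfold rappor_prob.
  rewrite <- (Rprod_tr p q k) by auto. apply Rprod_ext. intros j _.
  rewrite nth_swp by lia. rewrite tr_inv, <- (tr_eqb p q x (tr p q j)), tr_inv. reflexivity.
Qed.

Lemma Rprod_point (F G : nat -> R) l x : NoDup l -> In x l ->
  (forall j, In j l -> j <> x -> F j = G j) ->
  Rprod (map F l) * G x = Rprod (map G l) * F x.
Proof. intros Hnd. induction Hnd; simpl; [tauto|]. intros Hin Hfg.
  destruct Hin as [<-|Hin].
  - rewrite (Rprod_ext F G l). ring. intros j Hj; apply Hfg; auto. intros ->; auto.
  - rewrite (Hfg x0) by (auto; intros ->; auto).
    assert (E := IHHnd Hin (fun j Hj => Hfg j (or_intror Hj))). 
    rewrite Rmult_assoc, E. ring.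
Qed.

Definition wgt eps k (b : list bool) : R :=
  Rprod (map (fun j => if nth j b false then flip_prob eps else 1 - flip_prob eps) (seq 0 k)).

Definition rho eps x (b : list bool) : R :=
  if nth x b false then (1 - flip_prob eps) / flip_prob eps
  else flip_prob eps / (1 - flip_prob eps).

Lemma rappor_fact eps k x b : 0 < eps -> (x < k)%nat ->
  rappor_prob eps k x b = wgt eps k b * rho eps x b.
Proof. intros He Hx. pose proof (flip_bounds eps He) as Hf.
  unfold rappor_prob, wgt, rho.
  set (F := fun j => if Bool.eqb (nth j b false) (Nat.eqb x j) then 1 - flip_prob eps else flip_prob eps).
  set (G := fun j => if nth j b false then flip_prob eps else 1 - flip_prob eps).
  assert (E := Rprod_point F G (seq 0 k) x (seq_NoDup _ _)).
  assert (HG : G x <> 0) by (unfold G; destruct (nth x b false); lra).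
  apply Rmult_eq_reg_r with (G x); auto.
  rewrite E.
  - unfold F, G. rewrite Nat.eqb_refl. destruct (nth x b false); simpl; field; lra.
  - apply in_seq; lia.
  - intros j _ Hj. unfold F, G. rewrite (proj2 (Nat.eqb_neq x j)) by auto.
    destruct (nth j b false); reflexivity.
Qed.

Lemma wgt_sum eps k : Rsum (map (wgt eps k) (bvecs k)) = 1.
Proof. unfold wgt.
  rewrite (bvecs_prod k (fun j c => if c then flip_prob eps else 1 - flip_prob eps)).
  apply Rprod_one. intros; lra.
Qed.

Lemma wgt_pos eps k b : 0 < eps -> 0 < wgt eps k b.
Proof. intros He. pose proof (flip_bounds eps He). unfold wgt. apply Rprod_pos.
  intros j _. destruct (nth j b false); lra. Qed.

Definition unifp (k : nat) : nat -> R := fun _ => / INR k.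
Definition Ub eps k b := report_prob eps k (unifp k) b.

Lemma Ub_sum eps k : (1 <= k)%nat -> Rsum (map (Ub eps k) (bvecs k)) = 1.
Proof. intros Hk. unfold Ub, report_prob, sum_range.
  rewrite (Rsum_swap (fun b x => unifp k x * rappor_prob eps k x b)).
  rewrite (Rsum_ext _ (fun _ => / INR k)).
  - rewrite Rsum_const, length_seq. field. apply not_0_INR. lia.
  - intros x _. rewrite Rsum_scal. unfold unifp. rewrite rappor_sum. lra.
Qed.

Lemma Ub_swp eps k p q b : (p < k)%nat -> (q < k)%nat -> length b = k ->
  Ub eps k (swp p q b) = Ub eps k b.
Proof. intros. unfold Ub, report_prob, sum_range.
  rewrite <- (Rsum_tr p q k (fun x => unifp k x * rappor_prob eps k x b)) by auto.
  apply Rsum_ext. intros x _. rewrite rappor_swp; auto.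
Qed.

Lemma Ub_lower eps k b : 0 < eps -> (1 <= k)%nat ->
  wgt eps k b * (flip_prob eps / (1 - flip_prob eps)) <= Ub eps k b.
Proof. intros He Hk. pose proof (flip_bounds eps He). pose proof (wgt_pos eps k b He).
  unfold Ub, report_prob, sum_range.
  apply Rle_trans with (Rsum (map (fun _ => / INR k * (wgt eps k b * (flip_prob eps / (1 - flip_prob eps)))) (seq 0 k))).
  - rewrite Rsum_const, length_seq. right. field. split; [lra|apply not_0_INR; lia].
  - apply Rsum_le. intros x Hx. apply in_seq in Hx. unfold unifp.
    rewrite rappor_fact by (auto; lia). apply Rmult_le_compat_l.
    + left. apply Rinv_0_lt_compat, lt_0_INR. lia.
    + apply Rmult_le_compat_l; [lra|]. unfold rho. destruct (nth x b false); [|lra].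
      apply Rle_trans with 1.
      * apply Rmult_le_reg_r with (1 - flip_prob eps); [lra|]. unfold Rdiv. rewrite Rmult_assoc, Rinv_l; lra.
      * apply Rmult_le_reg_r with (flip_prob eps); [lra|]. unfold Rdiv. rewrite Rmult_assoc, Rinv_l; lra.
Qed.

Lemma Ub_pos eps k b : 0 < eps -> (1 <= k)%nat -> 0 < Ub eps k b.
Proof. intros He Hk. pose proof (flip_bounds eps He). pose proof (wgt_pos eps k b He).
  eapply Rlt_le_trans; [|apply Ub_lower; auto]. apply Rmult_lt_0_compat; auto.
  apply Rdiv_lt_0_compat; lra. Qed.

Definition Dd eps k i b := rappor_prob eps k (2*i) b - rappor_prob eps k (2*i+1) b.

Lemma Dd_bound eps k i b : 0 < eps -> (2*i+1 < k)%nat ->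
  Dd eps k i b ^ 2 / Ub eps k b <=
  ((1 - flip_prob eps)/flip_prob eps - flip_prob eps/(1 - flip_prob eps))^2
   * ((1 - flip_prob eps)/flip_prob eps) * wgt eps k b.
Proof. intros He Hk. pose proof (flip_bounds eps He) as Hf. pose proof (wgt_pos eps k b He) as Hw.
  set (f := flip_prob eps) in *.
  assert (Hl := Ub_lower eps k b He ltac:(lia)). fold f in Hl.
  assert (HU := Ub_pos eps k b He ltac:(lia)).
  unfold Dd. rewrite !rappor_fact by (auto; lia).
  set (a := (1 - f)/f). set (ai := f/(1-f)).
  assert (Ha : a * ai = 1) by (unfold a, ai; field; lra).
  assert (Hai : 0 < ai) by (unfold ai; apply Rdiv_lt_0_compat; lra).
  assert (Hai1 : ai < 1) by (unfold ai; apply Rmult_lt_reg_r with (1-f); [lra|]; unfold Rdiv; rewrite Rmult_assoc, Rinv_l; lra).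
  assert (Hdiff : (rho eps (2*i) b - rho eps (2*i+1) b)^2 <= (a - ai)^2).
  { unfold rho; fold f a ai. destruct (nth (2*i) b false), (nth (2*i+1) b false). all: try (right; ring); rewrite Rminus_diag; pose proof (pow2_ge_0 (a - ai)); simpl; lra. }
  apply Rle_trans with ((wgt eps k b)^2 * (a - ai)^2 / Ub eps k b).
  - unfold Rdiv. apply Rmult_le_compat_r; [left; apply Rinv_0_lt_compat; auto|].
    replace ((wgt eps k b * rho eps (2 * i) b - wgt eps k b * rho eps (2 * i + 1) b) ^ 2) with
      ((wgt eps k b)^2 * (rho eps (2*i) b - rho eps (2*i+1) b)^2) by ring.
    apply Rmult_le_compat_l; [nra|auto].
  - apply Rmult_le_reg_r with (Ub eps k b); auto.
    unfold Rdiv. rewrite Rmult_assoc, Rinv_l, Rmult_1_r by lra.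
    assert (0 <= (a-ai)^2) by apply pow2_ge_0.
    assert (Hapos : 0 < a) by (unfold a; apply Rdiv_lt_0_compat; lra).
    assert (a * (wgt eps k b * ai) <= a * Ub eps k b) by (apply Rmult_le_compat_l; [lra|]; change (f/(1-f)) with ai in Hl; lra).
    assert (wgt eps k b <= a * Ub eps k b).
    { replace (wgt eps k b) with (a * (wgt eps k b * ai)); [lra|]. rewrite <- Rmult_assoc, (Rmult_comm a), Rmult_assoc, Ha; ring. }

    replace (wgt eps k b ^ 2 * (a - ai) ^ 2) with (((a-ai)^2 * wgt eps k b) * wgt eps k b) by ring.
    replace ((a - ai) ^ 2 * a * wgt eps k b * Ub eps k b) with (((a-ai)^2 * wgt eps k b) * (a * Ub eps k b)) by ring.
    apply Rmult_le_compat_l; auto. apply Rmult_le_pos; lra.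
Qed.

Lemma sum_range_S n F : sum_range (S n) F = sum_range n F + F n.
Proof. unfold sum_range. rewrite seq_S, map_app, Rsum_app. simpl. lra. Qed.

Lemma sum_range_pairs m F :
  sum_range (2*m) F = sum_range m (fun i => F (2*i)%nat + F (2*i+1)%nat).
Proof. induction m.
  - reflexivity.
  - replace (2 * S m)%nat with (S (S (2*m))) by lia.
    rewrite !sum_range_S, IHm. replace (S (2*m)) with (2*m+1)%nat by lia. lra.
Qed.

Lemma sum_range_decomp m k F : (2*m <= k)%nat ->
  sum_range k F = sum_range m (fun i => F (2*i)%nat + F (2*i+1)%nat)
                  + Rsum (map F (seq (2*m) (k - 2*m))).
Proof. intros H. rewrite <- sum_range_pairs. unfold sum_range.
  replace k with (2*m + (k - 2*m))%nat at 1 by lia.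
  rewrite seq_app, map_app, Rsum_app. reflexivity. Qed.

Definition sg (z : list bool) (i : nat) : R := if nth i z false then 1 else -1.

Definition dl (m : nat) (z : list bool) (x : nat) : R :=
  if Nat.ltb x (2*m) then (if Nat.even x then sg z (Nat.div2 x) else - sg z (Nat.div2 x)) else 0.

Lemma dl_even m z i : (i < m)%nat -> dl m z (2*i) = sg z i.
Proof. intros H. unfold dl. rewrite (proj2 (Nat.ltb_lt _ _)) by lia.
  rewrite Nat.even_even, Nat.div2_double. auto. Qed.

Lemma dl_odd m z i : (i < m)%nat -> dl m z (2*i+1) = - sg z i.
Proof. intros H. unfold dl. rewrite (proj2 (Nat.ltb_lt _ _)) by lia.
  rewrite Nat.even_odd, Nat.div2_odd'. auto. Qed.

Lemma dl_out m z x : (2*m <= x)%nat -> dl m z x = 0.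
Proof. intros H. unfold dl. rewrite (proj2 (Nat.ltb_ge _ _)) by lia. auto. Qed.

Lemma sum_dl m k z (F : nat -> R) : (2*m <= k)%nat ->
  sum_range k (fun x => dl m z x * F x) = sum_range m (fun i => sg z i * (F (2*i)%nat - F (2*i+1)%nat)).
Proof. intros H. rewrite (sum_range_decomp m k) by auto.
  rewrite Rsum_zero. 2:{ intros x Hx. apply in_seq in Hx. rewrite dl_out by lia. lra. }
  unfold sum_range at 1 2. rewrite Rplus_0_r. apply Rsum_ext. intros i Hi. apply in_seq in Hi.
  rewrite dl_even, dl_odd by lia. ring.
Qed.

Lemma sg_sq z i : sg z i * sg z i = 1.
Proof. unfold sg; destruct (nth i z false); lra. Qed.

Lemma Rabs_sg z i : Rabs (sg z i) = 1.
Proof. unfold sg; destruct (nth i z false); [apply Rabs_R1|rewrite Rabs_left; lra]. Qed.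

Lemma Rabs_dl m z x : Rabs (dl m z x) <= 1.
Proof. unfold dl. destruct (Nat.ltb x (2*m)); [|rewrite Rabs_R0; lra].
  destruct (Nat.even x); rewrite ?Rabs_Ropp, Rabs_sg; lra. Qed.

Definition pz (k m : nat) (eta : R) (z : list bool) (x : nat) : R := / INR k + eta * dl m z x.

Lemma sum_range_const k c : sum_range k (fun _ => c) = INR k * c.
Proof. unfold sum_range. rewrite Rsum_const, length_seq. auto. Qed.

Lemma sum_range_plus k F G : sum_range k (fun x => F x + G x) = sum_range k F + sum_range k G.
Proof. unfold sum_range. apply Rsum_plus. Qed.

Lemma sum_range_scal k c F : sum_range k (fun x => c * F x) = c * sum_range k F.
Proof. unfold sum_range. apply Rsum_scal. Qed.

Lemma pz_sum k m eta z : (1 <= k)%nat -> (2*m <= k)%nat -> sum_range k (pz k m eta z) = 1.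
Proof. intros Hk H. unfold pz. rewrite sum_range_plus, sum_range_const, sum_range_scal.
  assert (E := sum_dl m k z (fun _ => 1) H).
  replace (sum_range k (dl m z)) with (sum_range k (fun x => dl m z x * 1)).
  2:{ unfold sum_range. apply Rsum_ext; intros; ring. }
  rewrite E. unfold sum_range at 1. rewrite Rsum_zero by (intros; ring).
  field. apply not_0_INR. lia.
Qed.

Lemma dl_bounds m z x : -1 <= dl m z x <= 1.
Proof. unfold dl, sg. destruct (Nat.ltb x (2*m)); [|lra].
  destruct (Nat.even x), (nth (Nat.div2 x) z false); lra. Qed.

Lemma pz_nonneg k m eta z x : (1 <= k)%nat -> 0 <= eta <= / INR k -> 0 <= pz k m eta z x.
Proof. intros Hk He. unfold pz. pose proof (dl_bounds m z x). nra. Qed.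

Lemma pz_dtv k m eta z : (2*m <= k)%nat -> 0 <= eta ->
  dTV_unif k (pz k m eta z) = INR m * eta.
Proof. intros H He. unfold dTV_unif.
  rewrite (sum_range_decomp m k) by auto.
  rewrite Rsum_zero. 2:{ intros x Hx. apply in_seq in Hx. unfold pz. rewrite dl_out by lia.
     replace (/ INR k + eta * 0 - / INR k) with 0 by ring. apply Rabs_R0. }

  unfold sum_range. rewrite (Rsum_ext _ (fun _ => 2 * eta)).
  - rewrite Rsum_const, length_seq. field.
  - intros i Hi. apply in_seq in Hi. unfold pz. rewrite dl_even, dl_odd by lia.
    replace (/ INR k + eta * sg z i - / INR k) with (eta * sg z i) by ring.
    replace (/ INR k + eta * - sg z i - / INR k) with (- (eta * sg z i)) by ring.
    rewrite Rabs_Ropp, Rabs_mult, Rabs_sg, Rabs_pos_eq by auto. ring.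
Qed.

Definition Ez eps k m z b : R := sum_range m (fun i => sg z i * Dd eps k i b).

Lemma Qz_decomp eps k m eta z b : (2*m <= k)%nat ->
  report_prob eps k (pz k m eta z) b = Ub eps k b + eta * Ez eps k m z b.
Proof. intros H. unfold report_prob, Ub, report_prob, pz, Ez, Dd.

  unfold sum_range at 1. rewrite (Rsum_ext _ (fun x => unifp k x * rappor_prob eps k x b + eta * (dl m z x * rappor_prob eps k x b))).
  2:{ intros; unfold unifp; ring. }
  rewrite Rsum_plus, Rsum_scal. fold (sum_range k (fun x => dl m z x * rappor_prob eps k x b)).
  rewrite sum_dl by auto. reflexivity.
Qed.

Lemma Dd_sum eps k i : Rsum (map (Dd eps k i) (bvecs k)) = 0.
Proof. unfold Dd. rewrite Rsum_minus, !rappor_sum. ring. Qed.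

Lemma Ez_sum eps k m z : Rsum (map (Ez eps k m z) (bvecs k)) = 0.
Proof. unfold Ez, sum_range.
  rewrite (Rsum_swap (fun b i => sg z i * Dd eps k i b)).
  apply Rsum_zero. intros i _. rewrite Rsum_scal, Dd_sum. ring. Qed.

Definition Sij eps k i j : R := Rsum (map (fun b => Dd eps k i b * Dd eps k j b / Ub eps k b) (bvecs k)).

Lemma tr_fix p q x : x <> p -> x <> q -> tr p q x = x.
Proof. intros. unfold tr. rewrite (proj2 (Nat.eqb_neq _ _)) by auto.
  rewrite (proj2 (Nat.eqb_neq _ _)) by auto. auto. Qed.

Lemma tr_p p q : tr p q p = q.
Proof. unfold tr. rewrite Nat.eqb_refl. auto. Qed.

Lemma tr_q p q : p <> q -> tr p q q = p.
Proof. intros. unfold tr. rewrite (proj2 (Nat.eqb_neq q p)) by auto. rewrite Nat.eqb_refl. auto. Qed.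

Lemma Sij_zero eps k i j : i <> j -> (2*i+1 < k)%nat -> (2*j+1 < k)%nat -> Sij eps k i j = 0.
Proof. intros Hij Hi Hj. unfold Sij.
  set (F := fun b => Dd eps k i b * Dd eps k j b / Ub eps k b).
  assert (E : Rsum (map (fun b => F (swp (2*j) (2*j+1) b)) (bvecs k)) = Rsum (map (fun b => - F b) (bvecs k))).
  { apply Rsum_ext. intros b Hb. apply bvecs_In in Hb. unfold F, Dd.
    rewrite !rappor_swp by (auto; lia). rewrite Ub_swp by (auto; lia).
    rewrite (tr_fix _ _ (2*i)), (tr_fix _ _ (2*i+1)) by lia.
    rewrite tr_p, tr_q by lia. unfold Rdiv. ring. }
  rewrite Rsum_swp in E by lia. rewrite <- (Rsum_scal (-1)) in E || idtac.
  rewrite (Rsum_ext (fun b => - F b) (fun b => -1 * F b)) in E by (intros; ring).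
  rewrite Rsum_scal in E. lra.
Qed.

Lemma Rsum_single (F : nat -> R) l i : NoDup l -> In i l -> (forall j, In j l -> j <> i -> F j = 0) ->
  Rsum (map F l) = F i.
Proof. intros Hnd. induction Hnd; simpl; [tauto|]. intros [<-|Hin] H0.
  - rewrite Rsum_zero; [ring|]. intros j Hj. apply H0; auto. intros ->; auto.
  - rewrite IHHnd; auto. rewrite H0; auto; [ring|]. intros ->; auto.
Qed.

Lemma chi_b eps k m z z' : 0 < eps -> (1 <= k)%nat -> (2*m <= k)%nat -> forall eta,
  Rsum (map (fun b => report_prob eps k (pz k m eta z) b * report_prob eps k (pz k m eta z') b / Ub eps k b) (bvecs k))
  = 1 + eta^2 * sum_range m (fun i => sg z i * sg z' i * Sij eps k i i).
Proof. intros He Hk Hm eta.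
  rewrite (Rsum_ext _ (fun b => Ub eps k b + eta * Ez eps k m z b + eta * Ez eps k m z' b
     + eta^2 * (Ez eps k m z b * Ez eps k m z' b / Ub eps k b))).
  2:{ intros b _. rewrite !Qz_decomp by auto. field. apply Rgt_not_eq, Ub_pos; auto. }
  rewrite !Rsum_plus, !Rsum_scal, Ub_sum, !Ez_sum by auto. f_equal. ring_simplify. f_equal.
  unfold Ez.
  rewrite (Rsum_ext _ (fun b => Rsum (map (fun i => Rsum (map (fun j =>
       sg z i * sg z' j * (Dd eps k i b * Dd eps k j b / Ub eps k b)) (seq 0 m))) (seq 0 m)))).
  2:{ intros b _. unfold sum_range. rewrite Rsum_mult. unfold Rdiv. rewrite <- Rsum_scal_r.
      apply Rsum_ext. intros i _. rewrite <- Rsum_scal_r. apply Rsum_ext. intros j _. ring. }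
  rewrite (Rsum_swap (fun b i => Rsum (map (fun j => sg z i * sg z' j * (Dd eps k i b * Dd eps k j b / Ub eps k b)) (seq 0 m)))).
  unfold sum_range. f_equal. apply Rsum_ext. intros i Hi. apply in_seq in Hi.
  rewrite (Rsum_swap (fun b j => sg z i * sg z' j * (Dd eps k i b * Dd eps k j b / Ub eps k b))).
  rewrite (Rsum_single _ _ i (seq_NoDup _ _)).
  - rewrite Rsum_scal. reflexivity.
  - apply in_seq; lia.
  - intros j Hj Hji. apply in_seq in Hj. rewrite Rsum_scal.
    fold (Sij eps k i j). rewrite Sij_zero by lia. ring.
Qed.

Lemma exp_le_inv x : x < 1 -> exp x <= / (1 - x).
Proof. intros H. pose proof (exp_ineq1_le (-x)). rewrite exp_Ropp in H0.
  pose proof (exp_pos x).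
  apply Rmult_le_reg_r with (1 - x); [lra|]. rewrite Rinv_l by lra.
  apply Rmult_le_reg_l with (/ exp x). apply Rinv_0_lt_compat; auto.
  rewrite Rmult_1_r, <- Rmult_assoc, Rinv_l by lra. lra. Qed.

Lemma cosh_bound x : Rabs x < 1 -> (exp x + exp (-x)) / 2 <= / (1 - x^2).
Proof. intros H. apply Rabs_def2 in H.
  pose proof (exp_le_inv x). pose proof (exp_le_inv (-x)).
  assert (/ (1 - x) + / (1 - - x) = 2 * / (1 - x^2)) by (field; repeat split; nra).
  lra. Qed.

Lemma bernoulli_inv m y : 0 <= y <= 1 -> INR m * y < 1 -> (/ (1 - y)) ^ m <= / (1 - INR m * y).
Proof. intros Hy H.
  assert (Hb : 1 - INR m * y <= (1 - y) ^ m).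
  { clear H. induction m. simpl; lra.
    rewrite S_INR. simpl. pose proof (pos_INR m). nra. }
  rewrite pow_inv. apply Rinv_le_contravar; lra.
Qed.

Lemma avg_exp m (s : nat -> R) S : 0 <= S < 1 -> (forall i, (i < m)%nat -> Rabs (s i) <= S) ->
  INR m * S^2 < 1 ->
  Rsum (map (fun z => Rsum (map (fun z' => (/2)^m * (/2)^m *
     exp (sum_range m (fun i => sg z i * sg z' i * s i))) (bvecs m))) (bvecs m))
  <= / (1 - INR m * S^2).
Proof. intros HS Hs Hm.
  set (c := fun j => (exp (s j) + exp (- s j)) / 2).
  rewrite (Rsum_ext _ (fun z => Rprod (map (fun j => (fun j (_ : bool) => /2 * c j) j (nth j z false)) (seq 0 m)))).
  - pose proof (bvecs_prod m (fun j (_ : bool) => /2 * c j)) as E. cbv beta in E. rewrite E.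
    apply Rle_trans with (Rprod (map (fun _ => / (1 - S^2)) (seq 0 m))).
    + apply Rprod_le. intros j Hj. apply in_seq in Hj.
      assert (Hsj := Hs j ltac:(lia)).
      assert (Habs : Rabs (s j) < 1) by lra.
      assert (0 <= c j) by (unfold c; pose proof (exp_pos (s j)); pose proof (exp_pos (- s j)); lra).
      split; [lra|].
      replace (/ 2 * c j + / 2 * c j) with (c j) by field.
      eapply Rle_trans; [apply cosh_bound; auto|].
      apply Rinv_le_contravar.
      * pose proof (Rle_abs (s j)). pose proof (Rle_abs (- s j)). rewrite Rabs_Ropp in *. nra.
      * pose proof (Rle_abs (s j)). pose proof (Rle_abs (- s j)). rewrite Rabs_Ropp in *. nra.
    + rewrite Rprod_const_seq. apply bernoulli_inv; [split; nra|auto].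
  - intros z _.
    rewrite (Rsum_ext _ (fun z' => Rprod (map (fun j => /2 * /2 * exp (sg z j * sg z' j * s j)) (seq 0 m)))).
    2:{ intros z' _. unfold sum_range. rewrite exp_Rsum, !Rprod_mult, !Rprod_const_seq. ring. }
    pose proof (bvecs_prod m (fun j c => / 2 * / 2 * exp ((if nth j z false then 1 else -1) * (if c then 1 else -1) * s j))) as E.
    cbv beta in E. unfold sg. rewrite E. apply Rprod_ext. intros j _. unfold c.
    destruct (nth j z false);
      replace (-1 * 1 * s j) with (- s j) by ring; replace (1 * -1 * s j) with (- s j) by ring;
      replace (1 * 1 * s j) with (s j) by ring; replace (-1 * -1 * s j) with (s j) by ring; field.
Qed.

Lemma rappor_nonneg eps k x b : 0 < eps -> 0 <= rappor_prob eps k x b.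
Proof. intros He. pose proof (flip_bounds eps He). unfold rappor_prob. apply Rprod_nonneg.
  intros j _. destruct (Bool.eqb _ _); lra. Qed.

Lemma report_nonneg eps k p b : 0 < eps -> (forall x, (x < k)%nat -> 0 <= p x) -> 0 <= report_prob eps k p b.
Proof. intros He Hp. unfold report_prob, sum_range. apply Rsum_nonneg. intros x Hx. apply in_seq in Hx.
  apply Rmult_le_pos; [apply Hp; lia|apply rappor_nonneg; auto]. Qed.

Lemma exp_pow x n : exp x ^ n = exp (INR n * x).
Proof. induction n; simpl. rewrite Rmult_0_l, exp_0; auto.
  rewrite IHn, <- exp_plus. f_equal. destruct n; simpl; ring. Qed.

Definition Cst eps := ((1 - flip_prob eps)/flip_prob eps - flip_prob eps/(1 - flip_prob eps))^2
   * ((1 - flip_prob eps)/flip_prob eps).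

Lemma Sii_bounds eps k i : 0 < eps -> (2*i+1 < k)%nat -> 0 <= Sij eps k i i <= Cst eps.
Proof. intros He Hi. unfold Sij. split.
  - apply Rsum_nonneg. intros b _. pose proof (Ub_pos eps k b He ltac:(lia)).
    apply Rmult_le_pos; [nra|left; apply Rinv_0_lt_compat; auto].
  - rewrite <- (Rmult_1_r (Cst eps)), <- (wgt_sum eps k), <- Rsum_scal.
    apply Rsum_le. intros b _. pose proof (Dd_bound eps k i b He Hi).
    unfold Cst. simpl in H |- *. rewrite Rmult_1_r in H. exact H.
Qed.

Lemma Cst_bound eps : 0 < eps <= 1 -> Cst eps <= 5 * eps^2.
Proof. intros He. unfold Cst, flip_prob.
  set (E := exp (eps/2)).
  assert (HE1 : 1 <= E). { unfold E. pose proof (exp_ineq1_le (eps/2)). lra. }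
  assert (HE2 : E <= 1 + eps).
  { unfold E. pose proof (exp_le_inv (eps/2) ltac:(lra)).
    assert (/ (1 - eps/2) <= 1 + eps).
    { apply Rmult_le_reg_r with (1 - eps/2); [lra|]. rewrite Rinv_l by lra. nra. }
    lra. }
  assert (Ha : (1 - / (E + 1)) / / (E + 1) = E) by (field; lra).
  assert (Hai : / (E + 1) / (1 - / (E + 1)) = / E) by (field; lra).
  rewrite Ha, Hai.
  assert (HiE : 1 - eps/2 <= / E).
  { unfold E. rewrite <- exp_Ropp. pose proof (exp_ineq1_le (- (eps/2))). lra. }
  assert (HiE2 : / E <= 1) by (rewrite <- Rinv_1; apply Rinv_le_contravar; lra).
  assert (0 <= E - / E <= 3/2 * eps) by lra.
  assert ((E - /E)^2 <= (3/2*eps)^2) by (apply pow_incr; lra).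
  assert ((E - / E) ^ 2 * E <= (3/2*eps)^2 * (1+eps)).
  { apply Rmult_le_compat; auto; try lra. apply pow2_ge_0. }
  nra.
Qed.

Lemma Rprod_inv {A} (h : A -> R) l : (forall x, In x l -> h x <> 0) ->
  Rprod (map (fun x => / h x) l) = / Rprod (map h l).
Proof. induction l; simpl; intros H. rewrite Rinv_1; auto.
  rewrite IHl by auto. rewrite Rinv_mult. auto. Qed.

Lemma avg_one m : Rsum (map (fun _ : list bool => (/2)^m) (bvecs m)) = 1.
Proof. pose proof (bvecs_prod m (fun _ _ => /2)) as E. cbv beta in E.
  rewrite (Rprod_ext (fun _ => /2 + /2) (fun _ => 1)) in E by (intros; lra).
  rewrite !Rprod_const_seq, pow1 in E. exact E. Qed.

Lemma pointwise_ineq X u D : 0 < u -> 0 <= D <= 1 -> X * D <= u / 6 + 3/2 * (X^2 / u).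
Proof. intros Hu HD.
  set (Y := X^2/u).
  assert (HY : Y * u = X^2) by (unfold Y; field; lra).
  apply Rmult_le_reg_l with u; auto.
  assert (0 <= (u * D / 3 - X)^2) by apply pow2_ge_0.
  assert (u * u * D * D <= u * u).
  { replace (u*u*D*D) with ((u*u)*(D*D)) by ring. rewrite <- (Rmult_1_r (u*u)) at 2.
    apply Rmult_le_compat_l; nra. }
  nra.
Qed.

Definition Un eps k (t : list (list bool)) := Rprod (map (Ub eps k) t).
Definition Qn eps k m eta z (t : list (list bool)) := Rprod (map (report_prob eps k (pz k m eta z)) t).
Definition Mix eps k m eta t := Rsum (map (fun z => (/2)^m * Qn eps k m eta z t) (bvecs m)).

Lemma Un_pos eps k t : 0 < eps -> (1 <= k)%nat -> 0 < Un eps k t.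
Proof. intros. unfold Un. apply Rprod_pos. intros; apply Ub_pos; auto. Qed.

Lemma Un_sum eps k n : (1 <= k)%nat -> Rsum (map (Un eps k) (transcripts n k)) = 1.
Proof. intros. unfold Un. rewrite transcripts_prod, Ub_sum, pow1; auto. Qed.

Lemma Qz_sum eps k m eta z : (1 <= k)%nat -> (2*m <= k)%nat ->
  Rsum (map (report_prob eps k (pz k m eta z)) (bvecs k)) = 1.
Proof. intros. rewrite (Rsum_ext _ (fun b => Ub eps k b + eta * Ez eps k m z b)).
  - rewrite Rsum_plus, Rsum_scal, Ub_sum, Ez_sum; auto. ring.
  - intros; apply Qz_decomp; auto. Qed.

Lemma Mix_sum eps k n m eta : (1 <= k)%nat -> (2*m <= k)%nat ->
  Rsum (map (Mix eps k m eta) (transcripts n k)) = 1.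
Proof. intros. unfold Mix.
  rewrite (Rsum_swap (fun t z => (/2)^m * Qn eps k m eta z t)).
  rewrite <- (avg_one m). apply Rsum_ext. intros z _.
  rewrite Rsum_scal. unfold Qn. rewrite transcripts_prod, Qz_sum, pow1; auto. ring. Qed.

Lemma mix_sq eps k n m eta : 0 < eps -> (1 <= k)%nat -> (2*m <= k)%nat ->
  Rsum (map (fun t => Mix eps k m eta t ^ 2 / Un eps k t) (transcripts n k)) =
  Rsum (map (fun z => Rsum (map (fun z' => (/2)^m * (/2)^m *
     (1 + eta^2 * sum_range m (fun i => sg z i * sg z' i * Sij eps k i i))^n) (bvecs m))) (bvecs m)).
Proof. intros He Hk Hm.
  rewrite (Rsum_ext _ (fun t => Rsum (map (fun z => Rsum (map (fun z' =>
     (/2)^m * (/2)^m * Rprod (map (fun b => report_prob eps k (pz k m eta z) b * report_prob eps k (pz k m eta z') b / Ub eps k b) t)) (bvecs m))) (bvecs m)))).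
  - rewrite (Rsum_swap (fun t z => Rsum (map (fun z' =>
     (/2)^m * (/2)^m * Rprod (map (fun b => report_prob eps k (pz k m eta z) b * report_prob eps k (pz k m eta z') b / Ub eps k b) t)) (bvecs m)))).
    apply Rsum_ext. intros z _.
    rewrite (Rsum_swap (fun t z' =>
     (/2)^m * (/2)^m * Rprod (map (fun b => report_prob eps k (pz k m eta z) b * report_prob eps k (pz k m eta z') b / Ub eps k b) t))).
    apply Rsum_ext. intros z' _.
    rewrite Rsum_scal, transcripts_prod, chi_b; auto.
  - intros t _. unfold Mix. simpl. rewrite Rmult_1_r, Rsum_mult. unfold Rdiv. rewrite <- Rsum_scal_r.
    apply Rsum_ext. intros z _. rewrite <- Rsum_scal_r. apply Rsum_ext. intros z' _.
    unfold Qn, Un. unfold Rdiv. rewrite !Rprod_mult, Rprod_inv.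
    + ring.
    + intros b _. apply Rgt_not_eq, Ub_pos; auto.
Qed.

Lemma core_bound eps k n m eta D :
  0 < eps -> (1 <= k)%nat -> (2*m <= k)%nat -> valid_rule D ->
  (forall z x, (x < k)%nat -> 0 <= pz k m eta z x) ->
  accept_prob eps k n (unifp k) D >= 2/3 ->
  (forall z, accept_prob eps k n (pz k m eta z) D <= 1/3) ->
  1/3 <= 1/6 + 3/2 * (Rsum (map (fun z => Rsum (map (fun z' => (/2)^m * (/2)^m *
     (1 + eta^2 * sum_range m (fun i => sg z i * sg z' i * Sij eps k i i))^n) (bvecs m))) (bvecs m)) - 1).
Proof. intros He Hk Hm HD Hpz Hu Hz.
  set (T := transcripts n k).
  assert (HA : Rsum (map (fun t => Mix eps k m eta t * D t) T) <= 1/3).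
  { unfold Mix. rewrite (Rsum_ext _ (fun t => Rsum (map (fun z => (/2)^m * (Qn eps k m eta z t * D t)) (bvecs m)))).
    2:{ intros t _. rewrite <- Rsum_scal_r. apply Rsum_ext. intros; ring. }
    rewrite (Rsum_swap (fun t z => (/2)^m * (Qn eps k m eta z t * D t))).
    apply Rle_trans with (Rsum (map (fun _ => (/2)^m * (1/3)) (bvecs m))).
    - apply Rsum_le. intros z _. rewrite Rsum_scal. apply Rmult_le_compat_l.
      + apply pow_le; lra.
      + apply Hz.
    - rewrite Rsum_scal_r, avg_one. lra. }
  assert (HU : Rsum (map (fun t => Un eps k t * D t) T) >= 2/3) by exact Hu.
  assert (HB : 1/3 <= Rsum (map (fun t => (Un eps k t - Mix eps k m eta t) * D t) T)).
  { rewrite (Rsum_ext _ (fun t => Un eps k t * D t - Mix eps k m eta t * D t)) by (intros; ring).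
    rewrite Rsum_minus. lra. }
  assert (HC : Rsum (map (fun t => (Un eps k t - Mix eps k m eta t) * D t) T) <=
     Rsum (map (fun t => Un eps k t / 6 + 3/2 * ((Un eps k t - Mix eps k m eta t)^2 / Un eps k t)) T)).
  { apply Rsum_le. intros t _. apply pointwise_ineq; auto. apply Un_pos; auto. }
  rewrite Rsum_plus, Rsum_scal in HC. unfold Rdiv at 1 in HC.
  rewrite Rsum_scal_r in HC. unfold T in HC. rewrite Un_sum in HC by auto.
  rewrite (Rsum_ext (fun t => (Un eps k t - Mix eps k m eta t)^2 / Un eps k t) (fun t => Mix eps k m eta t ^ 2 / Un eps k t - 2 * Mix eps k m eta t + Un eps k t)) in HC.
  2:{ intros t _. field. apply Rgt_not_eq, Un_pos; auto. }
  rewrite !Rsum_plus, Rsum_minus, Rsum_scal, Un_sum, Mix_sum, mix_sq in HC by auto.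
  unfold T in HB. lra.
Qed.

Theorem theorem5p2 :
  exists c : R, c > 0 /\
    forall (k n : nat) (gamma eps : R) (D : list (list bool) -> R),
      (2 <= k)%nat ->
      0 < gamma <= 1 / 4 ->
      0 < eps <= 1 ->
      valid_rule D ->
      is_uniformity_tester eps k n gamma D ->
      INR n >= c * (INR k * sqrt (INR k)) / (gamma ^ 2 * eps ^ 2).
Proof.
  exists (1/300). split; [lra|].
  intros k n gamma eps D Hk Hg He HD Ht.
  destruct (Rlt_or_le (INR n) (1/300 * (INR k * sqrt (INR k)) / (gamma^2*eps^2))) as [Hlt|Hge];
    [|apply Rle_ge; auto].
  exfalso.
  set (m := Nat.div2 k).
  assert (Hm2 : (2*m <= k)%nat /\ (k <= 2*m+1)%nat).
  { pose proof (Nat.div2_odd k). fold m in H. destruct (Nat.odd k); simpl in H; lia. }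
  destruct Hm2 as [Hm2 Hm3].
  assert (Hm1 : (1 <= m)%nat) by lia.
  assert (Hk1 : (1 <= k)%nat) by lia.
  assert (HK : 0 < INR k) by (apply lt_0_INR; lia).
  set (eta := 4 * gamma / INR k).
  assert (Heta : 0 <= eta <= / INR k).
  { unfold eta. split.
    - apply Rmult_le_pos; [lra|left; apply Rinv_0_lt_compat; auto].
    - unfold Rdiv. rewrite <- (Rmult_1_l (/ INR k)) at 2. apply Rmult_le_compat_r; [left; apply Rinv_0_lt_compat; auto|lra]. }
  assert (Hpz : forall z x, (x < k)%nat -> 0 <= pz k m eta z x) by (intros; apply pz_nonneg; auto).
  assert (Hdist : forall z, is_dist k (pz k m eta z)).
  { intros z. split; [intros; apply Hpz; auto|apply pz_sum; auto]. }
  assert (Hm4 : 4 * INR m > INR k).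
  { assert (k < 4*m)%nat by lia. apply lt_INR in H. rewrite mult_INR in H. simpl in H. lra. }
  assert (Hfar : forall z, dTV_unif k (pz k m eta z) > gamma).
  { intros z. rewrite pz_dtv by (auto; lra). unfold eta.
    replace (INR m * (4 * gamma / INR k)) with (gamma * (4 * INR m / INR k)) by (field; lra).
    assert (1 < 4 * INR m / INR k).
    { apply Rmult_lt_reg_r with (INR k); auto. unfold Rdiv. rewrite Rmult_assoc, Rinv_l; lra. }
    nra. }
  assert (Hz : forall z, accept_prob eps k n (pz k m eta z) D <= 1/3).
  { intros z. pose proof (proj2 (Ht _ (Hdist z)) (Hfar z)). lra. }
  assert (Hud : is_dist k (unifp k)).
  { split. intros; unfold unifp; left; apply Rinv_0_lt_compat; auto.
    unfold unifp. rewrite sum_range_const. field. lra. }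
  assert (Hu : accept_prob eps k n (unifp k) D >= 2/3).
  { apply (proj1 (Ht _ Hud)). intros i _. reflexivity. }
  pose proof (core_bound eps k n m eta D ltac:(lra) Hk1 Hm2 HD Hpz Hu Hz) as Hcore.
  assert (HC0 : 0 <= Cst eps) by (pose proof (Sii_bounds eps k 0 ltac:(lra) ltac:(lia)); lra).
  set (S := INR n * eta^2 * Cst eps).
  assert (HS0 : 0 <= S) by (unfold S; pose proof (pos_INR n); apply Rmult_le_pos; [apply Rmult_le_pos; [auto|apply pow2_ge_0]|auto]).
  assert (HmS : INR m * S^2 <= 1/20).
  { pose proof (Cst_bound eps He) as HCb.
    set (N := INR n). set (K := INR k). assert (HK2 : 0 < K) by (unfold K; lra).
    assert (HN : 0 <= N) by apply pos_INR.
    set (P := N * gamma^2 * eps^2).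
    assert (Hge2 : 0 < gamma^2 * eps^2) by (apply Rmult_lt_0_compat; apply pow_lt; lra).
    assert (HP0 : 0 <= P) by (unfold P; rewrite Rmult_assoc; apply Rmult_le_pos; lra).
    assert (HP : P < 1/300 * (K * sqrt K)).
    { unfold P. rewrite Rmult_assoc. apply Rmult_lt_reg_r with (/ (gamma^2 * eps^2)).
      apply Rinv_0_lt_compat; auto.
      rewrite Rmult_assoc, Rinv_r, Rmult_1_r by lra. exact Hlt. }
    assert (Hsq : 0 <= sqrt K) by apply sqrt_pos.
    assert (HP2 : P^2 < (1/300)^2 * K^3).
    { replace ((1/300)^2 * K^3) with ((1/300 * (K * sqrt K))^2).
      - simpl. rewrite !Rmult_1_r. apply Rmult_le_0_lt_compat; auto.
      - replace ((1 / 300 * (K * sqrt K)) ^ 2) with ((1/300)^2 * K^2 * (sqrt K * sqrt K)) by ring.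
        rewrite sqrt_sqrt; [ring|unfold K; lra]. }
    assert (HSK : S * K^2 <= 80 * P).
    { unfold S, eta, P. fold N K.
      replace (N * (4 * gamma / K) ^ 2 * Cst eps * K ^ 2) with (16 * (N * gamma^2) * Cst eps) by (field; lra).
      assert (0 <= N * gamma^2) by (apply Rmult_le_pos; [auto|apply pow2_ge_0]).
      nra. }
    assert (HmK : 2 * INR m <= K).
    { unfold K. apply le_INR in Hm2. rewrite mult_INR in Hm2. simpl in Hm2. lra. }
    assert (H1 : (S * K^2)^2 <= (80 * P)^2) by (apply pow_incr; split; [apply Rmult_le_pos; [auto|apply pow2_ge_0]|auto]).
    assert (H2 : S^2 * K^4 < 6400 * (1/300)^2 * K^3).
    { replace (S^2 * K^4) with ((S * K^2)^2) by ring. replace (6400 * (1/300)^2 * K^3) with (6400 * ((1/300)^2 * K^3)) by ring.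
      replace ((80 * P)^2) with (6400 * P^2) in H1 by ring. lra. }
    assert (H3 : S^2 * K < 6400 * (1/300)^2).
    { apply Rmult_lt_reg_r with (K^3). apply pow_lt; auto.
      replace (S^2 * K * K^3) with (S^2 * K^4) by ring. exact H2. }
    assert (0 <= S^2) by apply pow2_ge_0.
    nra. }
  assert (HS1 : S < 1).
  { assert (1 <= INR m) by (apply (le_INR 1); auto). assert (S^2 <= 1/20) by nra. nra. }
  assert (Hs : forall i, (i < m)%nat -> Rabs (INR n * eta^2 * Sij eps k i i) <= S).
  { intros i Hi. pose proof (Sii_bounds eps k i ltac:(lra) ltac:(lia)) as [Ha Hb].
    assert (0 <= INR n * eta^2) by (apply Rmult_le_pos; [apply pos_INR|apply pow2_ge_0]).
    rewrite Rabs_pos_eq by (apply Rmult_le_pos; auto).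
    unfold S. apply Rmult_le_compat_l; auto. }
  pose proof (avg_exp m (fun i => INR n * eta^2 * Sij eps k i i) S ltac:(lra) Hs ltac:(lra)) as Havg.
  set (X := Rsum (map (fun z => Rsum (map (fun z' => (/2)^m * (/2)^m *
     (1 + eta^2 * sum_range m (fun i => sg z i * sg z' i * Sij eps k i i))^n) (bvecs m))) (bvecs m))) in Hcore.
  assert (HX : X <= / (1 - INR m * S^2)).
  { eapply Rle_trans; [|exact Havg]. unfold X. apply Rsum_le. intros z _. apply Rsum_le. intros z' _.
    apply Rmult_le_compat_l; [apply Rmult_le_pos; apply pow_le; lra|].
    set (tau := eta^2 * sum_range m (fun i => sg z i * sg z' i * Sij eps k i i)).
    assert (H0 : 0 <= 1 + tau).
    { unfold tau. rewrite <- chi_b by (auto; lra). apply Rsum_nonneg. intros b _.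
      apply Rmult_le_pos; [apply Rmult_le_pos; apply report_nonneg; auto; lra|].
      left; apply Rinv_0_lt_compat, Ub_pos; auto; lra. }
    apply Rle_trans with (exp tau ^ n).
    - apply pow_incr. split; auto. apply exp_ineq1_le.
    - rewrite exp_pow. right. f_equal. unfold tau. rewrite <- sum_range_scal, <- sum_range_scal.
      unfold sum_range. apply Rsum_ext. intros; ring. }
  assert (HX2 : / (1 - INR m * S^2) <= 20/19).
  { assert (0 <= INR m * S^2) by (apply Rmult_le_pos; [apply pos_INR|apply pow2_ge_0]).
    replace (20/19) with (/ (19/20)) by field. apply Rinv_le_contravar; lra. }
  lra.
Qed.
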